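(* Let either $t_i=i+\beta$ for $i\ge1$ with $\beta>-1$, and set $\rho(u)=\log u$; or $t_i=i^\alpha$ for $i\ge1$ with $0<\alpha<1$, and set $\rho(u)=u^{1/\alpha-1}$. Let $n(t)=\#\{k\ge1: t_k\le t\}$. There are constants $C>0$ and $D$, depending only on $\alpha$ or $\beta$, such that for all sufficiently large $M$, \[ u^3\int_0^{t_M}\frac{n(t)}{t^2(t^2+u^2+ut\sqrt2)}\,dt\ge C\,u\,\rho(\min(t_M,u)) \] whenever $u\ge D$. *)

(* Defs.v *)
From Stdlib Require Import Reals Lra List.
From Coquelicot Require Import Coquelicot.
Open Scope R_scope.

Definition count_le (s : nat -> R) (N : nat) (x : R) : nat :=
  length (filter (fun k => if Rle_dec (s k) x then true else false) (seq 1 N)).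

(* n(x) = #{k >= 1 : s k <= x}, as the supremum of the finite truncated counts
   (real part; the counts are finite for the sequences considered). *)
Definition ncount (s : nat -> R) (x : R) : R :=
  real (Sup_seq (fun N => Finite (INR (count_le s N x)))).

Definition lhs_integral (s : nat -> R) (M : nat) (u : R) : R :=
  u ^ 3 * RInt (fun t => ncount s t / (t ^ 2 * (t ^ 2 + u ^ 2 + u * t * sqrt 2))) 0 (s M).

(* Main.v *)
Require Import Defs.
From Stdlib Require Import Reals Lra Lia List.
From Coquelicot Require Import Coquelicot.
Open Scope R_scope.

Lemma count_le_S s N x : count_le s (S N) x =
  (count_le s N x + (if Rle_dec (s (S N)) x then 1 else 0))%nat.
Proof.
  unfold count_le. rewrite seq_S, filter_app, length_app. simpl.
  replace (1 + N)%nat with (S N) by lia.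
  destruct (Rle_dec (s (S N)) x); simpl; lia.
Qed.

Lemma count_le_exact s x k :
  (forall j, (1 <= j)%nat -> (s j <= x <-> (j <= k)%nat)) ->
  forall N, count_le s N x = Nat.min N k.
Proof.
  intros H N. induction N.
  - reflexivity.
  - rewrite count_le_S, IHN. destruct (Rle_dec (s (S N)) x) as [h|h].
    + apply H in h; lia.
    + assert (~ (S N <= k)%nat) by (intro h'; apply h, H; lia). lia.
Qed.

Lemma ncount_exact s x k :
  (forall j, (1 <= j)%nat -> (s j <= x <-> (j <= k)%nat)) ->
  ncount s x = INR k.
Proof.
  intros H. unfold ncount.
  rewrite (is_sup_seq_unique _ (Finite (INR k))). reflexivity.
  intros eps. split.
  - intros n. rewrite (count_le_exact s x k H). simpl.
    pose proof (cond_pos eps).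
    assert (INR (Nat.min n k) <= INR k) by (apply le_INR; lia). lra.
  - exists k. rewrite (count_le_exact s x k H). simpl.
    rewrite Nat.min_id. pose proof (cond_pos eps). lra.
Qed.

Section Incr.
Variable s : nat -> R.
Hypothesis Hinc : forall j, (1 <= j)%nat -> s j < s (S j).

Lemma s_mono i j : (1 <= i)%nat -> (i <= j)%nat -> s i <= s j.
Proof.
  intros Hi Hij. induction Hij. lra. pose proof (Hinc m ltac:(lia)). lra.
Qed.

Lemma iff_of_bracket x k : (1 <= k)%nat -> s k <= x < s (S k) ->
  forall j, (1 <= j)%nat -> (s j <= x <-> (j <= k)%nat).
Proof.
  intros Hk [h1 h2] j Hj. split.
  - intros h. destruct (Compare_dec.le_lt_dec j k) as [l|l]; auto.
    pose proof (s_mono (S k) j ltac:(lia) l). lra.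
  - intros l. pose proof (s_mono j k Hj l). lra.
Qed.

Lemma iff_below x : x < s 1 ->
  forall j, (1 <= j)%nat -> (s j <= x <-> (j <= 0)%nat).
Proof.
  intros h j Hj. split.
  - intros h'. pose proof (s_mono 1 j ltac:(lia) Hj). lra.
  - lia.
Qed.

Lemma bracket_exists x : s 1 <= x -> forall N, (1 <= N)%nat -> x < s N ->
  exists k, (1 <= k)%nat /\ s k <= x < s (S k).
Proof.
  intros h1 N. induction N; intros HN hN. lia.
  destruct (Nat.eq_dec N 0) as [->|nz]. lra.
  destruct (Rle_dec (s N) x) as [l|l].
  - exists N. split. lia. lra.
  - apply IHN. lia. lra.
Qed.

Hypothesis Hunb : forall x, exists N, (1 <= N)%nat /\ x < s N.

Lemma ncount_cases x :
  (x < s 1 /\ ncount s x = 0) \/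
  (exists k, (1 <= k)%nat /\ s k <= x < s (S k) /\ ncount s x = INR k).
Proof.
  destruct (Rlt_dec x (s 1)) as [l|l].
  - left. split. auto. rewrite (ncount_exact s x 0). reflexivity. apply iff_below; auto.
  - right. destruct (Hunb x) as [N [HN hN]].
    destruct (bracket_exists x ltac:(lra) N HN hN) as [k [Hk hk]].
    exists k. repeat split; try tauto. apply ncount_exact, iff_of_bracket; auto.
Qed.

Lemma ncount_ge0 x : 0 <= ncount s x.
Proof.
  destruct (ncount_cases x) as [[_ ->]|[k [_ [_ ->]]]]. lra. apply pos_INR.
Qed.

Hypothesis Hs1 : 0 < s 1.

Definition Fi (u t : R) := ncount s t / (t ^ 2 * (t ^ 2 + u ^ 2 + u * t * sqrt 2)).

Lemma den_pos u t : 0 < u -> 0 < t -> 0 < t ^ 2 * (t ^ 2 + u ^ 2 + u * t * sqrt 2).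
Proof.
  intros hu ht. pose proof (sqrt_pos 2).
  apply Rmult_lt_0_compat. nra. assert (0 <= u*t*sqrt 2). apply Rmult_le_pos; nra. nra.
Qed.

Lemma cont_c (c u t : R) : 0 < u -> 0 < t ->
  continuous (fun t => c / (t ^ 2 * (t ^ 2 + u ^ 2 + u * t * sqrt 2))) t.
Proof.
  intros hu ht. apply (ex_derive_continuous (K:=R_AbsRing) (V:=R_NormedModule)). auto_derive.
  pose proof (den_pos u t hu ht). lra.
Qed.

Lemma Fi_ge0 u t : 0 < u -> 0 < t -> 0 <= Fi u t.
Proof.
  intros hu ht. unfold Fi. apply Rdiv_le_0_compat. apply ncount_ge0. apply den_pos; auto.
Qed.

Lemma ex_RInt_Fi u : 0 < u -> forall M, (1 <= M)%nat -> ex_RInt (Fi u) 0 (s M).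
Proof.
  intros hu M HM. induction HM.
  - apply (ex_RInt_ext (fun _ => 0)). 2: apply ex_RInt_const.
    intros x. rewrite Rmin_left, Rmax_right by lra. intros hx.
    unfold Fi. rewrite (ncount_exact s x 0). simpl. unfold Rdiv. ring.
    apply iff_below; lra.
  - apply ex_RInt_Chasles with (s m). auto.
    pose proof (Hinc m ltac:(lia)). pose proof (s_mono 1 m ltac:(lia) HM).
    apply (ex_RInt_ext (fun t => INR m / (t ^ 2 * (t ^ 2 + u ^ 2 + u * t * sqrt 2)))).
    + intros x. rewrite Rmin_left, Rmax_right by lra. intros hx.
      unfold Fi. rewrite (ncount_exact s x m). reflexivity.
      apply iff_of_bracket; auto; lra.
    + apply (ex_RInt_continuous (V:=R_CompleteNormedModule)). intros z. rewrite Rmin_left, Rmax_right by lra. intros hz.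
      apply cont_c; lra.
Qed.

Lemma RInt_lower u M a b (h : R -> R) : 0 < u -> (1 <= M)%nat -> 0 <= a <= b -> b <= s M ->
  ex_RInt h a b -> (forall x, a < x < b -> h x <= Fi u x) ->
  RInt h a b <= RInt (Fi u) 0 (s M).
Proof.
  intros hu HM hab hb Hh hle.
  pose proof (ex_RInt_Fi u hu M HM) as E.
  assert (E1 : ex_RInt (Fi u) 0 b) by (apply (ex_RInt_Chasles_1 (V:=R_CompleteNormedModule)) with (s M); auto; lra).
  assert (E2 : ex_RInt (Fi u) b (s M)) by (apply (ex_RInt_Chasles_2 (V:=R_CompleteNormedModule)) with 0; auto; lra).
  assert (E3 : ex_RInt (Fi u) 0 a) by (apply (ex_RInt_Chasles_1 (V:=R_CompleteNormedModule)) with b; auto; lra).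
  assert (E4 : ex_RInt (Fi u) a b) by (apply (ex_RInt_Chasles_2 (V:=R_CompleteNormedModule)) with 0; auto; lra).
  rewrite <- (RInt_Chasles (V:=R_CompleteNormedModule) _ 0 b (s M)) by auto.
  rewrite <- (RInt_Chasles (V:=R_CompleteNormedModule) _ 0 a b) by auto.
  assert (0 <= RInt (Fi u) 0 a) by (apply RInt_ge_0; auto; lra || (intros; apply Fi_ge0; lra)).
  assert (0 <= RInt (Fi u) b (s M)) by (apply RInt_ge_0; auto; lra || (intros; apply Fi_ge0; lra)).
  assert (RInt h a b <= RInt (Fi u) a b) by (apply RInt_le; auto; lra).
  unfold plus; simpl. lra.
Qed.

End Incr.

Lemma sqrt2_lt2 : sqrt 2 < 2.
Proof. apply sqrt_less; lra. Qed.

Lemma ln_le a b : 0 < a -> a <= b -> ln a <= ln b.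
Proof. intros ha hab. destruct (Req_dec a b) as [->|n]. lra. left. apply ln_increasing; lra. Qed.

Lemma Q_le u x : 0 < x -> x <= u -> x ^ 2 + u ^ 2 + u * x * sqrt 2 <= 4 * u ^ 2.
Proof.
  intros hx hxu. pose proof sqrt2_lt2. pose proof (sqrt_pos 2).
  assert (u * x * sqrt 2 <= u * u * 2).
  { apply Rmult_le_compat; try nra. } nra.
Qed.

Lemma part_beta : forall beta : R, -1 < beta ->
     let s := fun i : nat => INR i + beta in
     exists C D : R, 0 < C /\
       exists M0 : nat, forall (M : nat) (u : R), (M0 <= M)%nat -> D <= u ->
         lhs_integral s M u >= C * u * ln (Rmin (s M) u).
Proof.
  intros beta hb s.
  assert (Hinc : forall j, (1 <= j)%nat -> s j < s (S j)).
  { intros j _. unfold s. rewrite S_INR. lra. }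
  assert (Hunb : forall x, exists N, (1 <= N)%nat /\ x < s N).
  { intros x. destruct (INR_unbounded (x - beta)) as [N hN]. exists (S N).
    split. lia. unfold s. rewrite S_INR. lra. }
  assert (Hs1 : 0 < s 1%nat) by (unfold s; simpl; lra).
  set (c := 2 * (beta + 2)).
  assert (hc : 2 < c) by (unfold c; lra).
  exists (1/16), (c * c). split. lra.
  destruct (INR_unbounded (c * c - beta)) as [N0 hN0].
  exists (S N0). intros M u HM hu.
  assert (hM : c * c <= s M).
  { unfold s. pose proof (le_INR _ _ HM). rewrite S_INR in H. lra. }
  set (m := Rmin (s M) u).
  assert (hm : c * c <= m) by (apply Rmin_glb; lra).
  assert (hmu : m <= u) by apply Rmin_r.
  assert (hmM : m <= s M) by apply Rmin_l.
  assert (hu0 : 0 < u) by nra.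
  set (h := fun t => / t / (8 * u ^ 2)).
  assert (hI : is_RInt h c m (minus (ln m / (8 * u ^ 2)) (ln c / (8 * u ^ 2)))).
  { apply (is_RInt_derive (V:=R_CompleteNormedModule) (fun t => ln t / (8 * u ^ 2))).
    - intros x hx. rewrite Rmin_left, Rmax_right in hx by nra.
      auto_derive. lra. unfold h. field. split; lra.
    - intros x hx. rewrite Rmin_left, Rmax_right in hx by nra.
      apply (ex_derive_continuous (K:=R_AbsRing) (V:=R_NormedModule)). unfold h. auto_derive.
      lra. }
  pose proof (RInt_lower s Hinc Hunb Hs1 u M c m h hu0) as RL.
  assert (hlow : RInt h c m <= RInt (Fi s u) 0 (s M)).
  { apply RL; [lia | split; nra | lra | eexists; exact hI | ].

    intros x hx.
      destruct (ncount_cases s Hinc Hunb x) as [[hx1 _]|[k [hk [[hk1 hk2] hn]]]].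
      + unfold s in hx1; simpl in hx1. unfold c in hx. lra.
      + unfold Fi. rewrite hn. unfold s in hk2. rewrite S_INR in hk2.
        assert (hkx : x / 2 <= INR k) by (unfold c in hx; lra).
        pose proof (Q_le u x ltac:(lra) ltac:(lra)) as hQ.
        pose proof (den_pos u x hu0 ltac:(lra)) as hd.
        set (Q := x ^ 2 + u ^ 2 + u * x * sqrt 2) in *.
        apply Rle_trans with ((x / 2) / (x ^ 2 * Q)).
        * unfold h. replace (/ x / (8 * u ^ 2)) with (/ (8 * u ^ 2 * x)) by (field; split; lra).
          replace (x / 2 / (x ^ 2 * Q)) with (/ (2 * x * Q)) by (field; split; nra).
          apply Rinv_le_contravar. nra. nra.
        * unfold Rdiv. apply Rmult_le_compat_r. left. apply Rinv_0_lt_compat. lra. lra. }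
  rewrite (is_RInt_unique _ _ _ _ hI) in hlow. unfold minus, plus, opp in hlow; simpl in hlow.
  unfold lhs_integral. change (RInt _ 0 (s M)) with (RInt (Fi s u) 0 (s M)).
  fold m.
  assert (hlc : 0 < ln c) by (rewrite <- ln_1; apply ln_increasing; lra).
  assert (hlm : 2 * ln c <= ln m).
  { replace (2 * ln c) with (ln (c * c)) by (rewrite ln_mult; lra). apply ln_le; nra. }
  assert (u ^ 3 * ((ln m / (8 * u ^ 2)) + - (ln c / (8 * u ^ 2))) = u * (ln m - ln c) / 8).
  { field. lra. }
  assert (u ^ 3 * ((ln m / (8 * u ^ 2)) + - (ln c / (8 * u ^ 2))) <= u ^ 3 * RInt (Fi s u) 0 (s M)).
  { apply Rmult_le_compat_l. pose proof (pow_lt u 3 hu0). lra. exact hlow. }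
  assert (u * (2 * ln c) <= u * ln m) by (apply Rmult_le_compat_l; lra).
  assert (1 / 16 * u * ln m <= u * (ln m - ln c) / 8) by lra.
  lra.
Qed.

Lemma Rpower_1_base y : Rpower 1 y = 1.
Proof. unfold Rpower. rewrite ln_1, Rmult_0_r. apply exp_0. Qed.

Lemma Rpower_pos x y : 0 < Rpower x y.
Proof. unfold Rpower. apply exp_pos. Qed.

Lemma part_alpha : forall alpha : R, 0 < alpha < 1 ->
     let s := fun i : nat => Rpower (INR i) alpha in
     exists C D : R, 0 < C /\
       exists M0 : nat, forall (M : nat) (u : R), (M0 <= M)%nat -> D <= u ->
         lhs_integral s M u >= C * u * Rpower (Rmin (s M) u) (1 / alpha - 1).
Proof.
  intros alpha ha s.
  set (q := 1 / alpha).
  assert (hq : 1 < q) by (unfold q; apply Rlt_div_r; lra || (apply Rmult_lt_reg_r with alpha; lra)).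
  assert (hqa : forall x, 0 < x -> Rpower (Rpower x q) alpha = x).
  { intros x hx. rewrite Rpower_mult. replace (q * alpha) with 1 by (unfold q; field; lra).
    apply Rpower_1; auto. }
  assert (hinv : forall a b, 0 < a -> 0 < b -> Rpower a alpha <= b -> a <= Rpower b q).
  { intros a b pa pb hab. destruct (Rle_dec a (Rpower b q)) as [l|l]; auto.
    exfalso. assert (Rpower (Rpower b q) alpha < Rpower a alpha).
    { apply Rlt_Rpower_l. lra. split. apply Rpower_pos. lra. }
    rewrite hqa in H by auto. lra. }
  assert (Hinc : forall j, (1 <= j)%nat -> s j < s (S j)).
  { intros j hj. unfold s. apply Rlt_Rpower_l. lra. split.
    apply lt_0_INR; lia. apply lt_INR; lia. }
  assert (Hunb : forall x, exists N, (1 <= N)%nat /\ x < s N).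
  { intros x. destruct (INR_unbounded (Rpower (Rmax x 1) q)) as [N hN]. exists (S N).
    split. lia. unfold s.
    assert (Rmax x 1 < Rpower (INR (S N)) alpha).
    { rewrite <- (hqa (Rmax x 1)). apply Rlt_Rpower_l. lra. split. apply Rpower_pos.
      rewrite S_INR. lra. pose proof (Rmax_r x 1). lra. }
    pose proof (Rmax_l x 1). lra. }
  assert (Hs1 : 0 < s 1%nat) by (unfold s; simpl; rewrite Rpower_1_base; lra).
  set (K := Rpower 2 alpha).
  assert (hK : 1 < K).
  { unfold K. rewrite <- (Rpower_O 2) by lra. apply Rpower_lt; lra. }
  assert (hKq : Rpower K q = 2).
  { unfold K. rewrite Rpower_mult. replace (alpha * q) with 1 by (unfold q; field; lra).
    apply Rpower_1; lra. }
  exists (Rpower (/ 2) q / 16), (2 * K). split.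
  { pose proof (Rpower_pos (/2) q). lra. }
  destruct (INR_unbounded (Rpower (2 * K) q)) as [N0 hN0].
  exists (S N0). intros M u HM hu.
  assert (hM : 2 * K <= s M).
  { pose proof (le_INR _ _ HM) as h1. rewrite S_INR in h1.
    pose proof (Rpower_pos (2 * K) q).
    left. rewrite <- (hqa (2 * K)) by lra. unfold s. apply Rlt_Rpower_l. lra. split. lra. lra. }
  set (m := Rmin (s M) u).
  assert (hm : 2 * K <= m) by (apply Rmin_glb; lra).
  assert (hmu : m <= u) by apply Rmin_r.
  assert (hmM : m <= s M) by apply Rmin_l.
  assert (hu0 : 0 < u) by lra.
  set (P := Rpower (m * / 2) q).
  assert (hP : 2 <= P).
  { rewrite <- hKq. unfold P. apply Rle_Rpower_l. lra. lra. }
  set (L := (P / 2) / (m ^ 2 * (4 * u ^ 2))).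
  pose proof (RInt_lower s Hinc Hunb Hs1 u M (m * / 2) m (fun _ => L) hu0) as RL.
  assert (hlow : RInt (fun _ => L) (m * / 2) m <= RInt (Fi s u) 0 (s M)).
  { apply RL; [lia | split; lra | lra | apply ex_RInt_const | ].
    intros x hx.
    destruct (ncount_cases s Hinc Hunb x) as [[hx1 _]|[k [hk [[hk1 hk2] hn]]]].
    - unfold s in hx1; simpl in hx1. rewrite Rpower_1_base in hx1. lra.
    - unfold Fi. rewrite hn.
      assert (hk3 : Rpower x q < INR (S k)).
      { destruct (Rlt_dec (Rpower x q) (INR (S k))) as [l|l]; auto. exfalso.
        assert (Rpower (INR (S k)) alpha <= Rpower (Rpower x q) alpha).
        { apply Rle_Rpower_l. lra. split. apply lt_0_INR; lia. lra. }
        rewrite hqa in H by lra. unfold s in hk2. lra. }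
      rewrite S_INR in hk3.
      assert (hxq : P <= Rpower x q) by (apply Rle_Rpower_l; lra).
      assert (hkx : P / 2 <= INR k) by lra.
      pose proof (Q_le u x ltac:(lra) ltac:(lra)) as hQ.
      pose proof (den_pos u x hu0 ltac:(lra)) as hd.
      set (Q := x ^ 2 + u ^ 2 + u * x * sqrt 2) in *.
      apply Rle_trans with ((P / 2) / (x ^ 2 * Q)).
      + unfold L. unfold Rdiv. apply Rmult_le_compat_l. lra.
        apply Rinv_le_contravar. lra.
        apply Rmult_le_compat; nra.
      + unfold Rdiv. apply Rmult_le_compat_r. left. apply Rinv_0_lt_compat. lra. lra. }
  rewrite RInt_const in hlow. unfold scal in hlow; simpl in hlow. unfold mult in hlow; simpl in hlow.
  unfold lhs_integral. change (RInt _ 0 (s M)) with (RInt (Fi s u) 0 (s M)).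
  fold m. fold q.
  assert (hm0 : 0 < m) by lra.
  assert (hR : Rpower (/ 2) q / 16 * u * Rpower m (q - 1) = u ^ 3 * ((m - m * / 2) * L)).
  { unfold Rminus at 1. rewrite Rpower_plus, Rpower_Ropp, Rpower_1 by lra.
    unfold L, P. rewrite <- Rpower_mult_distr by lra. field. split. lra.
    pose proof (Rpower_pos (/2) q). lra. }
  rewrite hR. apply Rle_ge. apply Rmult_le_compat_l. pose proof (pow_lt u 3 hu0). lra.
  exact hlow.
Qed.

Theorem lemma2p1 :
  (forall beta : R, -1 < beta ->
     let s := fun i : nat => INR i + beta in
     exists C D : R, 0 < C /\
       exists M0 : nat, forall (M : nat) (u : R), (M0 <= M)%nat -> D <= u ->
         lhs_integral s M u >= C * u * ln (Rmin (s M) u))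
  /\
  (forall alpha : R, 0 < alpha < 1 ->
     let s := fun i : nat => Rpower (INR i) alpha in
     exists C D : R, 0 < C /\
       exists M0 : nat, forall (M : nat) (u : R), (M0 <= M)%nat -> D <= u ->
         lhs_integral s M u >= C * u * Rpower (Rmin (s M) u) (1 / alpha - 1)).
Proof. split. exact part_beta. exact part_alpha. Qed.
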